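(* Let $F_n$, $n=1,2,\dots$, and $F$ be metric preserving functions on $[0,+\infty)^2$. If $F$ is continuous and $F_n\to F$ pointwise, then $F_n\to F$ uniformly on every compact subset of $[0,+\infty)^2$.
   Context: A function $F\colon[0,+\infty)^2\to[0,+\infty)$ is metric preserving if for any metric spaces $(X,d_X),(Y,d_Y)$ the function $((x,y),(x',y'))\mapsto F(d_X(x,x'),d_Y(y,y'))$ is a metric on $X\times Y$. *)

(* Defs.v *)
From Stdlib Require Import Reals List.
Open Scope R_scope.

Definition is_metric (X : Type) (d : X -> X -> R) : Prop :=
  (forall x y, 0 <= d x y) /\
  (forall x y, d x y = 0 <-> x = y) /\
  (forall x y, d x y = d y x) /\
  (forall x y z, d x z <= d x y + d y z).

(* F : [0,+oo)^2 -> [0,+oo) is metric preserving: for all metric spaces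
   (X,dX), (Y,dY), ((x,y),(x',y')) |-> F (dX x x') (dY y y') is a metric on X*Y.
   F is represented as a function R -> R -> R; only its values on [0,+oo)^2
   matter. *)
Definition metric_preserving (F : R -> R -> R) : Prop :=
  (forall a b, 0 <= a -> 0 <= b -> 0 <= F a b) /\
  (forall (X Y : Type) (dX : X -> X -> R) (dY : Y -> Y -> R),
      is_metric X dX -> is_metric Y dY ->
      is_metric (X * Y)%type
        (fun p q => F (dX (fst p) (fst q)) (dY (snd p) (snd q)))).

Definition quadrant (a b : R) : Prop := 0 <= a /\ 0 <= b.

Definition continuous_on_quadrant (F : R -> R -> R) : Prop :=
  forall a b, quadrant a b ->
    forall eps, 0 < eps -> exists delta, 0 < delta /\
      forall a' b', quadrant a' b' ->
        sqrt ((a' - a)^2 + (b' - b)^2) < delta -> Rabs (F a' b' - F a b) < eps.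

Definition open2 (U : R -> R -> Prop) : Prop :=
  forall a b, U a b -> exists r, 0 < r /\
    forall a' b', sqrt ((a' - a)^2 + (b' - b)^2) < r -> U a' b'.

Definition compact2 (K : R -> R -> Prop) : Prop :=
  forall (I : Type) (U : I -> R -> R -> Prop),
    (forall i, open2 (U i)) ->
    (forall a b, K a b -> exists i, U i a b) ->
    exists l : list I, forall a b, K a b -> exists i, In i l /\ U i a b.

Definition pointwise_cv (Fs : nat -> R -> R -> R) (F : R -> R -> R) : Prop :=
  forall a b, quadrant a b -> Un_cv (fun n => Fs n a b) (F a b).

Definition uniform_cv_on (K : R -> R -> Prop) (Fs : nat -> R -> R -> R)
  (F : R -> R -> R) : Prop :=
  forall eps, 0 < eps -> exists N : nat, forall n, (n >= N)%nat ->
    forall a b, K a b -> Rabs (Fs n a b - F a b) < eps.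

(* Main.v *)
Require Import Defs.
From Stdlib Require Import Reals List Lra Lia.
Open Scope R_scope.

Lemma metric_abs : is_metric R (fun x y => Rabs (x - y)).
Proof.
  split; [|split; [|split]].
  - intros; apply Rabs_pos.
  - intros x y; split.
    + unfold Rabs; destruct (Rcase_abs _); intros; lra.
    + intros ->. replace (y - y) with 0 by ring. apply Rabs_R0.
  - intros; apply Rabs_minus_sym.
  - intros x y z; unfold Rabs; repeat destruct (Rcase_abs _); lra.
Qed.

Lemma metric_trunc (d : R) : 0 < d -> is_metric R (fun x y => Rmin (Rabs (x - y)) d).
Proof.
  intros Hd.
  split; [|split; [|split]].
  - intros; unfold Rmin, Rabs; repeat destruct (Rle_dec _ _); repeat destruct (Rcase_abs _); lra.
  - intros x y; split.
    + unfold Rmin, Rabs; repeat destruct (Rle_dec _ _); repeat destruct (Rcase_abs _); intros; lra.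
    + intros ->. replace (y - y) with 0 by ring. rewrite Rabs_R0.
      unfold Rmin; destruct (Rle_dec _ _); lra.
  - intros; rewrite Rabs_minus_sym; reflexivity.
  - intros x y z; unfold Rmin, Rabs; repeat destruct (Rle_dec _ _);
      repeat destruct (Rcase_abs _); lra.
Qed.

Lemma step1 (G : R -> R -> R) : metric_preserving G ->
  forall x1 x2 y1 y2, 0 <= x1 -> 0 <= x2 -> 0 <= y1 -> 0 <= y2 ->
  G x1 x2 <= G y1 y2 + G (Rabs (x1 - y1)) (Rabs (x2 - y2)).
Proof.
  intros [_ HG] x1 x2 y1 y2 h1 h2 h3 h4.
  destruct (HG R R _ _ metric_abs metric_abs) as [_ [_ [_ Ht]]].
  specialize (Ht (0,0) (y1,y2) (x1,x2)). simpl in Ht.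
  rewrite (Rabs_minus_sym y1), (Rabs_minus_sym y2) in Ht.
  replace (Rabs (0 - x1)) with x1 in Ht by (unfold Rabs; destruct (Rcase_abs _); lra).
  replace (Rabs (0 - x2)) with x2 in Ht by (unfold Rabs; destruct (Rcase_abs _); lra).
  replace (Rabs (0 - y1)) with y1 in Ht by (unfold Rabs; destruct (Rcase_abs _); lra).
  replace (Rabs (0 - y2)) with y2 in Ht by (unfold Rabs; destruct (Rcase_abs _); lra).
  exact Ht.
Qed.

Lemma step1abs (G : R -> R -> R) : metric_preserving G ->
  forall x1 x2 y1 y2, 0 <= x1 -> 0 <= x2 -> 0 <= y1 -> 0 <= y2 ->
  Rabs (G x1 x2 - G y1 y2) <= G (Rabs (x1 - y1)) (Rabs (x2 - y2)).
Proof.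
  intros HG x1 x2 y1 y2 h1 h2 h3 h4.
  pose proof (step1 G HG x1 x2 y1 y2 h1 h2 h3 h4).
  pose proof (step1 G HG y1 y2 x1 x2 h3 h4 h1 h2).
  rewrite (Rabs_minus_sym y1), (Rabs_minus_sym y2) in H0.
  apply Rabs_le; lra.
Qed.

Lemma step2 (G : R -> R -> R) : metric_preserving G ->
  forall d h k, 0 < d -> 0 <= h <= d -> 0 <= k <= d -> G h k <= 2 * G d d.
Proof.
  intros [_ HG] d h k Hd Hh Hk.
  destruct (HG R R _ _ (metric_trunc d Hd) (metric_trunc d Hd)) as [_ [_ [_ Ht]]].
  specialize (Ht (0,0) (h+d,k+d) (h,k)). simpl in Ht.
  replace (Rmin (Rabs (0 - h)) d) with h in Ht
    by (unfold Rmin, Rabs; destruct (Rle_dec _ _); destruct (Rcase_abs _); lra).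
  replace (Rmin (Rabs (0 - k)) d) with k in Ht
    by (unfold Rmin, Rabs; destruct (Rle_dec _ _); destruct (Rcase_abs _); lra).
  replace (Rmin (Rabs (0 - (h + d))) d) with d in Ht
    by (unfold Rmin, Rabs; destruct (Rle_dec _ _); destruct (Rcase_abs _); lra).
  replace (Rmin (Rabs (0 - (k + d))) d) with d in Ht
    by (unfold Rmin, Rabs; destruct (Rle_dec _ _); destruct (Rcase_abs _); lra).
  replace (Rmin (Rabs (h + d - h)) d) with d in Ht
    by (unfold Rmin, Rabs; destruct (Rle_dec _ _); destruct (Rcase_abs _); lra).
  replace (Rmin (Rabs (k + d - k)) d) with d in Ht
    by (unfold Rmin, Rabs; destruct (Rle_dec _ _); destruct (Rcase_abs _); lra).
  lra.
Qed.

Lemma G00 (G : R -> R -> R) : metric_preserving G -> G 0 0 = 0.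
Proof.
  intros [_ HG].
  destruct (HG R R _ _ metric_abs metric_abs) as [_ [Hi _]].
  specialize (Hi (0,0) (0,0)). simpl in Hi.
  replace (0 - 0) with 0 in Hi by ring. rewrite Rabs_R0 in Hi.
  apply Hi; reflexivity.
Qed.

Lemma abs_le_dist u v : Rabs u <= sqrt (u ^ 2 + v ^ 2).
Proof.
  rewrite <- sqrt_Rsqr_abs, Rsqr_pow2. apply sqrt_le_1_alt. nra.
Qed.

Lemma dist_lt u v r : 0 < r -> Rabs u < r / 2 -> Rabs v < r / 2 ->
  sqrt (u ^ 2 + v ^ 2) < r.
Proof.
  intros Hr Hu Hv.
  rewrite <- (sqrt_pow2 r) by lra.
  apply sqrt_lt_1_alt. split; [nra|].
  rewrite <- (pow2_abs u), <- (pow2_abs v).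
  pose proof (Rabs_pos u); pose proof (Rabs_pos v). nra.
Qed.

Theorem mainTheorem16 (Fs : nat -> R -> R -> R) (F : R -> R -> R) :
  (forall n, metric_preserving (Fs n)) ->
  metric_preserving F ->
  continuous_on_quadrant F ->
  pointwise_cv Fs F ->
  forall K : R -> R -> Prop,
    (forall a b, K a b -> quadrant a b) ->
    compact2 K ->
    uniform_cv_on K Fs F.
Proof.
  intros HFs HF Hc Hpw K HKq HK eps Heps.
  set (e := eps / 6).
  assert (He : 0 < e) by (unfold e; lra).
  assert (Hq00 : quadrant 0 0) by (split; lra).
  destruct (Hc 0 0 Hq00 e He) as [d0 [Hd0 Hc0]].
  set (d := d0 / 3).
  assert (Hd : 0 < d) by (unfold d; lra).
  assert (HFd : F d d < e).
  { assert (Hqd : quadrant d d) by (split; lra).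
    specialize (Hc0 d d Hqd).
    rewrite (G00 F HF) in Hc0.
    assert (Hdist : sqrt ((d - 0) ^ 2 + (d - 0) ^ 2) < d0).
    { apply dist_lt; [lra| |]; rewrite Rabs_right; unfold d; lra. }
    specialize (Hc0 Hdist). apply Rabs_def2 in Hc0. lra. }
  destruct (Hpw d d (conj (Rlt_le _ _ Hd) (Rlt_le _ _ Hd)) e He) as [N0 HN0].
  set (Pr := fun t : (R * R) * (R * nat) =>
    K (fst (fst t)) (snd (fst t)) /\ 0 < fst (snd t) /\ fst (snd t) <= d /\
    (forall a' b', quadrant a' b' ->
       sqrt ((a' - fst (fst t)) ^ 2 + (b' - snd (fst t)) ^ 2) < fst (snd t) ->
       Rabs (F a' b' - F (fst (fst t)) (snd (fst t))) < e) /\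
    (forall n, (n >= snd (snd t))%nat ->
       Rabs (Fs n (fst (fst t)) (snd (fst t)) - F (fst (fst t)) (snd (fst t))) < e)).
  set (U := fun (i : {t | Pr t}) (a b : R) =>
    Rabs (a - fst (fst (proj1_sig i))) < fst (snd (proj1_sig i)) / 2 /\
    Rabs (b - snd (fst (proj1_sig i))) < fst (snd (proj1_sig i)) / 2).
  destruct (HK {t | Pr t} U) as [l Hl].
  - intros [t Ht] a b [Ha Hb]. unfold U, open2 in *; cbn [proj1_sig] in *.
    set (p1 := fst (fst t)) in *. set (p2 := snd (fst t)) in *.
    set (r := fst (snd t)) in *.
    exists (Rmin (r / 2 - Rabs (a - p1)) (r / 2 - Rabs (b - p2))).
    split.
    + unfold Rmin; destruct (Rle_dec _ _); lra.
    + intros a' b' Hab.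
      pose proof (abs_le_dist (a' - a) (b' - b)) as H1.
      pose proof (abs_le_dist (b' - b) (a' - a)) as H2.
      rewrite Rplus_comm in H2.
      pose proof (Rabs_triang (a' - a) (a - p1)) as T1.
      pose proof (Rabs_triang (b' - b) (b - p2)) as T2.
      replace (a' - a + (a - p1)) with (a' - p1) in T1 by ring.
      replace (b' - b + (b - p2)) with (b' - p2) in T2 by ring.
      assert (M1 : Rmin (r / 2 - Rabs (a - p1)) (r / 2 - Rabs (b - p2)) <= r / 2 - Rabs (a - p1)) by apply Rmin_l.
      assert (M2 : Rmin (r / 2 - Rabs (a - p1)) (r / 2 - Rabs (b - p2)) <= r / 2 - Rabs (b - p2)) by apply Rmin_r.
      split; lra.
  - intros a b Hab.
    destruct (HKq a b Hab) as [Ha Hb].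
    destruct (Hc a b (conj Ha Hb) e He) as [rho [Hrho Hcr]].
    destruct (Hpw a b (conj Ha Hb) e He) as [Na HNa].
    assert (Hp : Pr ((a, b), (Rmin rho d, Na))).
    { unfold Pr; cbn [fst snd]. split; [exact Hab|]. split.
      { unfold Rmin; destruct (Rle_dec _ _); lra. }
      split; [apply Rmin_r|]. split.
      - intros a' b' Hq Hdst. apply Hcr; [exact Hq|].
        pose proof (Rmin_l rho d). lra.
      - intros n Hn. apply HNa. exact Hn. }
    exists (exist _ _ Hp). unfold U; simpl.
    replace (a - a) with 0 by ring. replace (b - b) with 0 by ring.
    rewrite Rabs_R0. split; unfold Rmin; destruct (Rle_dec _ _); lra.
  - set (Nf := fun i : {t | Pr t} => snd (snd (proj1_sig i))).
    exists (fold_right (fun i m => Nat.max (Nf i) m) N0 l).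
    assert (Hb0 : forall l0, (N0 <= fold_right (fun i m => Nat.max (Nf i) m) N0 l0)%nat).
    { induction l0; simpl; [lia|]. lia. }
    assert (Hbi : forall l0 i, In i l0 -> (Nf i <= fold_right (fun i m => Nat.max (Nf i) m) N0 l0)%nat).
    { induction l0; simpl; [tauto|]. intros i [<-|Hi]; [lia|]. specialize (IHl0 i Hi). lia. }
    intros n Hn a b Hab.
    destruct (Hl a b Hab) as [i [Hil HUi]].
    pose proof (Hbi l i Hil) as HNi.
    destruct i as [t Ht]. unfold U in HUi. simpl in HUi. change (Nf (exist _ t Ht)) with (snd (snd t)) in HNi.
    destruct Ht as [HKp [Hr [Hrd [Hcp HNp]]]].
    set (p1 := fst (fst t)) in *. set (p2 := snd (fst t)) in *.
    set (r := fst (snd t)) in *.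
    destruct HUi as [Ua Ub].
    destruct (HKq a b Hab) as [Ha Hb].
    destruct (HKq p1 p2 HKp) as [Hp1 Hp2].
    assert (H1 : Rabs (Fs n a b - Fs n p1 p2) < 4 * e).
    { eapply Rle_lt_trans. apply (step1abs _ (HFs n)); assumption.
      eapply Rle_lt_trans. apply (step2 _ (HFs n) d); try lra.
      - split; [apply Rabs_pos|lra].
      - split; [apply Rabs_pos|lra].
      - assert (Hn0 : (n >= N0)%nat) by (pose proof (Hb0 l); lia).
        specialize (HN0 n Hn0). unfold R_dist in HN0. apply Rabs_def2 in HN0. lra. }
    assert (H2 : Rabs (F a b - F p1 p2) < e).
    { apply Hcp; [split; assumption|]. apply dist_lt; assumption. }
    assert (H3 : Rabs (Fs n p1 p2 - F p1 p2) < e).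
    { apply HNp. lia. }
    apply Rabs_def2 in H1. apply Rabs_def2 in H2. apply Rabs_def2 in H3.
    apply Rabs_def1; unfold e in *; lra.
Qed.
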